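(* Let $(\underline\ell,\underline{\mathbf s})\in\mathbf F^r_+$ and let $g\in\mathbf U(\mathfrak n^-_{r-1/2}[t])_{-\eta}$ with $\eta\ne0$. Then $[\mathbf x^+_r(\underline\ell,\underline{\mathbf s}),g]$ is a linear combination of elements of the form $g'\,\mathbf x^+_r(\underline m,\underline{\mathbf p})$ with $g'\in\mathbf U(\mathfrak n^-_{r-1/2}[t])$ and $(\underline m,\underline{\mathbf p})\in\mathbf F^r_+$; moreover, if $g'$ is a constant then $|\underline{\mathbf p}|\blacktriangleright|\underline{\mathbf s}|$.
   Context: $\mathfrak g=\mathfrak{sp}_{2r}$: complex matrices $(a_{i,j})$, indices $1,\dots,r,-r,\dots,-1$, $a_{i,j}=-\mathrm{sgn}(i)\mathrm{sgn}(j)a_{-j,-i}$; $\mathfrak h$ spanned by $E_{i,i}-E_{-i,-i}$. Root vectors: $x^+_{i,j-1}=E_{i,j}-E_{-j,-i}$, $x^-_{i,j-1}=E_{j,i}-E_{-i,-j}$, $x^+_{i,\overline j}=E_{i,-j}+E_{j,-i}$, $x^-_{i,\overline j}=E_{-j,i}+E_{-i,j}$ ($1\le i<j\le r$), $x^+_{i,\overline i}=E_{i,-i}$, $x^-_{i,\overline i}=E_{-i,i}$, $x^\pm_{i,r}:=x^\pm_{i,\overline r}$. $\mathfrak n^-_{r-1/2}$ is the span of $x^-_{i,j},x^-_{i,\overline j}$ for $1\le i\le j<r$; $\mathfrak a[t]=\mathfrak a\otimes\mathbb C[t]$; $\mathbf U(\mathfrak n^-_{r-1/2}[t])_{-\eta}$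 is the subspace of elements of weight $-\eta\in\mathfrak h^*$ under the adjoint action of $\mathfrak h$. $\mathbf F_+$: pairs $(\ell,\mathbf s)$, $\ell\in\mathbb N$, $\mathbf s=(\mathbf s(1)\le\dots\le\mathbf s(\ell))$ with all $\mathbf s(p)\in\mathbb N_{>0}$, including $(0,\emptyset)$; $|\mathbf s|=\sum_p\mathbf s(p)$; $\mathbf F^r_+$ the $r$-fold product, elements $(\underline\ell,\underline{\mathbf s})$, $|\underline{\mathbf s}|=(|\mathbf s_1|,\dots,|\mathbf s_r|)$. $\mathbf x^+_r(\underline\ell,\underline{\mathbf s})=\prod_{i=1}^r\prod_{p=1}^{\ell_i}(x^+_{i,r}\otimes t^{\mathbf s_i(p)})$ (in increasing $i$). For $\underline d,\underline e\in\mathbb N^r$, $\underline d\blacktriangleright\underline e$ means that at the largest index $s$ with $d_s\ne e_s$ one has $d_s>e_s$. *)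

(* Defs.v *)
From mathcomp Require Import all_boot all_algebra.
From mathcomp Require Import complex.
From mathcomp Require Import Rstruct.
From Stdlib Require Reals.

Set Implicit Arguments.
Unset Strict Implicit.
Unset Printing Implicit Defensive.
Import GRing.Theory.
Local Open Scope ring_scope.

Definition C : fieldType := (Rdefinitions.R)[i].

Section Sp.
Variable r : nat.

(* Matrices of size 2r.  Row/column position p : 'I_(2r) encodes the index
   1,...,r,-r,...,-1 in this order:  i (1<=i<=r) |-> i-1,  -j (1<=j<=r) |-> 2r-j. *)
Definition mx := 'M[C]_(r.*2).

Definition pos (z : int) : nat :=
  if (0 <= z) then (absz z - 1)%N else (r.*2 - absz z)%N.

Definition E (i j : int) : mx :=
  \matrix_(p, q) (((p : nat) == pos i) && ((q : nat) == pos j))%:R.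

(* sign of the index sitting at position p; -i sits at position rev_ord (pos i) *)
Definition sgnp (p : 'I_(r.*2)) : C := if (p < r)%N then 1 else -1.

Definition is_sp (A : mx) : bool :=
  [forall p, forall q, A p q == - (sgnp p * sgnp q) * A (rev_ord q) (rev_ord p)].

Definition zi (n : nat) : int := Posz n.

(* x^+_{i,r} := x^+_{i,\bar r}  (1 <= i <= r) *)
Definition xplus (i : nat) : mx :=
  if (i < r)%N then E (zi i) (- zi r) + E (zi r) (- zi i) else E (zi r) (- zi r).

(* x^-_{i,j} = x^-_{i,(j+1)-1} = E_{j+1,i} - E_{-i,-(j+1)}   (i <= j) *)
Definition xminus_root (i j : nat) : mx :=
  E (zi j.+1) (zi i) - E (- zi i) (- zi j.+1).
Definition xminus_bar (i j : nat) : mx :=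
  if (i < j)%N then E (- zi j) (zi i) + E (- zi i) (zi j) else E (- zi i) (zi i).

Definition nminus_basis : seq mx :=
  flatten [seq flatten [seq [:: xminus_root i j; xminus_bar i j] | j <- iota i (r - i)]
          | i <- iota 1 (r - 1)].

(* Cartan element  sum_i d_i (E_{i,i} - E_{-i,-i}); h^* is identified with 'I_r -> C
   via the coordinates mu_i = mu(E_{i,i} - E_{-i,-i}). *)
Definition cartan (d : 'I_r -> C) : mx :=
  \sum_(i < r) d i *: (E (zi i.+1) (zi i.+1) - E (- zi i.+1) (- zi i.+1)).

Definition letter_wt (mu : 'I_r -> C) (X : mx) : Prop :=
  forall d : 'I_r -> C,
    cartan d *m X - X *m cartan d = (\sum_(i < r) mu i * d i) *: X.

(* generators:  (A, k)  stands for  A (x) t^k *)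
Definition gen := (mx * nat)%type.
Definition word := seq gen.
(* formal linear combinations of words in the free (tensor) algebra *)
Definition fsum := seq (C * word).

Definition coef (f : fsum) (w : word) : C := \sum_(x <- f | x.2 == w) x.1.
Definition fmul (f h : fsum) : fsum := [seq (x.1 * y.1, x.2 ++ y.2) | x <- f, y <- h].
Definition fneg (f : fsum) : fsum := [seq (- x.1, x.2) | x <- f].
Definition fone (w : word) : fsum := [:: (1, w)].

Definition linrel (k : nat) (c : C) (A B : mx) : fsum :=
  [:: (1, [:: (c *: A + B, k)]); (- c, [:: (A, k)]); (-1, [:: (B, k)])].
Definition brel (a b : nat) (A B : mx) : fsum :=
  [:: (1, [:: (A, a); (B, b)]); (-1, [:: (B, b); (A, a)]);
      (-1, [:: (A *m B - B *m A, (a + b)%N)])].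

Definition is_rel (f : fsum) : Prop :=
  (exists k c A B, is_sp A /\ is_sp B /\ f = linrel k c A B) \/
  (exists a b A B, is_sp A /\ is_sp B /\ f = brel a b A B).

(* f lies in the two-sided ideal generated by the relations *)
Definition in_ideal (f : fsum) : Prop :=
  exists L : seq ((C * word) * fsum * word),
    (forall e, e \in L -> is_rel e.1.2) /\
    forall w, coef f w =
      coef (flatten [seq fmul (fone e.1.1.2) (fmul e.1.2 [:: (e.1.1.1, e.2)]) | e <- L]) w.

(* equality in U(sp_{2r}[t]) *)
Definition eqU (f h : fsum) : Prop := in_ideal (f ++ fneg h).

(* words in the generators of n^-_{r-1/2}[t]  (monomials spanning U(n^-_{r-1/2}[t])) *)
Definition nminus_word (w : word) : bool := all (fun x => x.1 \in nminus_basis) w.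

Fixpoint word_wt (w : word) (nu : 'I_r -> C) : Prop :=
  match w with
  | [::] => forall i, nu i = 0
  | x :: w' => exists mu, letter_wt mu x.1 /\ word_wt w' (fun i => nu i - mu i)
  end.

Definition isFplus (s : seq nat) : bool := sorted leq s && all (fun k => (0 < k)%N) s.
Definition isFr (s : {ffun 'I_r -> seq nat}) : Prop := forall i, isFplus (s i).

(* x^+_r(l, s) = prod_{i=1}^r prod_{p=1}^{l_i} (x^+_{i,r} (x) t^{s_i(p)}) *)
Definition xword (s : {ffun 'I_r -> seq nat}) : word :=
  flatten [seq [seq (xplus i.+1, k) | k <- s i] | i : 'I_r <- enum 'I_r].

Definition absF (s : {ffun 'I_r -> seq nat}) (i : 'I_r) : nat := sumn (s i).

Definition btri (d e : 'I_r -> nat) : Prop :=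
  exists s : 'I_r, (e s < d s)%N /\ forall t : 'I_r, (s < t)%N -> d t = e t.

End Sp.

(* Main.v *)
Require Import Defs.
From mathcomp Require Import all_boot all_algebra.
From mathcomp Require Import complex Rstruct.
From mathcomp Require Import zify ring.
Import GRing.Theory.
Local Open Scope ring_scope.

Set Implicit Arguments.
Unset Strict Implicit.
Unset Printing Implicit Defensive.

Section Ideal.
Variable r : nat.
Implicit Types (f h k : fsum r) (w v : word r).

Lemma coef_cat f h w : coef (f ++ h) w = coef f w + coef h w.
Proof. by rewrite /coef big_cat. Qed.

Lemma coef_neg f w : coef (fneg f) w = - coef f w.
Proof. by rewrite /coef /fneg big_map /= -sumrN. Qed.

Lemma coef_nil w : coef ([::] : fsum r) w = 0.
Proof. by rewrite /coef big_nil. Qed.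

Lemma coef_cons c u f w : coef ((c, u) :: f) w = (if u == w then c else 0) + coef f w.
Proof. by rewrite /coef big_cons /=; case: (u == w); rewrite ?add0r. Qed.

Definition Tm (c : C) w1 w2 f : fsum r := [seq (c * x.1, w1 ++ x.2 ++ w2) | x <- f].

Definition midw w1 w2 v : word r := take (size v - size w1 - size w2) (drop (size w1) v).

Lemma midw_eq w1 w2 (x : word r) v : w1 ++ x ++ w2 = v -> x = midw w1 w2 v.
Proof.
move=> <-; rewrite /midw drop_size_cat // !size_cat.
have -> : (size w1 + (size x + size w2) - size w1 - size w2 = size x)%N by lia.
by rewrite take_size_cat.
Qed.

Lemma coefT c w1 w2 f v :
  coef (Tm c w1 w2 f) v =
  if w1 ++ midw w1 w2 v ++ w2 == v then c * coef f (midw w1 w2 v) else 0.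
Proof.
rewrite /coef /Tm big_map /=.
case: eqP => [Hv|Hv].
  rewrite mulr_sumr; apply: eq_bigl => x /=.
  apply/eqP/eqP => [H|->//]; exact: midw_eq H.
apply: big1 => x /eqP H; exfalso; apply: Hv.
by rewrite -(midw_eq H).
Qed.

Lemma coefT_ext c w1 w2 f h :
  (forall w, coef f w = coef h w) ->
  forall v, coef (Tm c w1 w2 f) v = coef (Tm c w1 w2 h) v.
Proof. by move=> H v; rewrite !coefT H. Qed.

Definition term (e : (C * word r) * fsum r * word r) : fsum r :=
  fmul (fone e.1.1.2) (fmul e.1.2 [:: (e.1.1.1, e.2)]).

Lemma fmul1 f c w2 : fmul f [:: (c, w2)] = [seq (x.1 * c, x.2 ++ w2) | x <- f].
Proof. by elim: f => // x f; rewrite /fmul /= => ->. Qed.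

Lemma fone_mul w1 f : fmul (fone w1) f = [seq (1 * x.1, w1 ++ x.2) | x <- f].
Proof. by rewrite /fmul /fone /= cats0. Qed.

Lemma termE e : term e = Tm e.1.1.1 e.1.1.2 e.2 e.1.2.
Proof.
rewrite /term fmul1 fone_mul -map_comp /Tm; apply: eq_map => x /=.
by rewrite mul1r mulrC.
Qed.

Definition GL (L : seq ((C * word r) * fsum r * word r)) := flatten [seq term e | e <- L].

Lemma coef_flatten (Fs : seq (fsum r)) w : coef (flatten Fs) w = \sum_(F <- Fs) coef F w.
Proof. by elim: Fs => [|F Fs IH] /=; rewrite ?big_nil ?coef_nil // big_cons coef_cat IH. Qed.

Definition J f := in_ideal f.

Lemma J_ext f h : (forall w, coef f w = coef h w) -> J f -> J h.
Proof. by move=> H [L [HL HL2]]; exists L; split=> // w; rewrite -H. Qed.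

Lemma J_nil : J [::].
Proof. by exists [::]; split=> // w; rewrite coef_nil. Qed.

Lemma J_cat f h : J f -> J h -> J (f ++ h).
Proof.
move=> [L1 [H1 E1]] [L2 [H2 E2]]; exists (L1 ++ L2); split.
  by move=> e; rewrite mem_cat => /orP [/H1|/H2].
by move=> w; rewrite coef_cat E1 E2 map_cat flatten_cat coef_cat.
Qed.

Lemma Tm_flatten c w1 w2 (Fs : seq (fsum r)) :
  Tm c w1 w2 (flatten Fs) = flatten [seq Tm c w1 w2 F | F <- Fs].
Proof. by rewrite /Tm map_flatten. Qed.

Lemma J_T c w1 w2 f : J f -> J (Tm c w1 w2 f).
Proof.
move=> [L [HL EL]].
exists [seq ((c * e.1.1.1, w1 ++ e.1.1.2), e.1.2, e.2 ++ w2) | e <- L]; split.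
  by move=> e /mapP [e' He' ->]; exact: HL He'.
move=> v; rewrite (coefT_ext _ _ _ EL) Tm_flatten -!map_comp.
congr (coef (flatten _) v); apply: eq_map => e /=.
rewrite !fmul1 !fone_mul /Tm -!map_comp; apply: eq_map => x /=.
by rewrite !catA !mul1r mulrCA.
Qed.

Lemma J_rel f : is_rel f -> J f.
Proof.
move=> H; exists [:: ((1, [::]), f, [::])]; split.
  by move=> e; rewrite inE => /eqP ->.
move=> w; rewrite /= cats0 fmul1 fone_mul -map_comp /coef big_map /=.
by apply: eq_big => x /=; rewrite ?cats0 ?mul1r ?mulr1.
Qed.

Definition eqv f h := J (f ++ fneg h).

Lemma eqv_coef f h : (forall w, coef f w = coef h w) -> eqv f h.
Proof.
move=> H; apply: J_ext J_nil => w; by rewrite coef_nil coef_cat coef_neg H subrr.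
Qed.

Lemma eqv_refl f : eqv f f.
Proof. exact: eqv_coef. Qed.

Lemma eqv_trans f h k : eqv f h -> eqv h k -> eqv f k.
Proof.
move=> H1 H2; apply: J_ext (J_cat H1 H2) => w.
by rewrite !coef_cat !coef_neg addrA subrK.
Qed.

Lemma eqv_sym f h : eqv f h -> eqv h f.
Proof.
move=> H; apply: J_ext (J_T (-1) [::] [::] H) => w.
rewrite coefT /=.
have -> : midw [::] [::] w = w by rewrite /midw /= drop0 !subn0 take_size.
by rewrite cats0 eqxx !coef_cat !coef_neg mulN1r opprD opprK addrC.
Qed.

Lemma eqv_cat f f' h h' : eqv f f' -> eqv h h' -> eqv (f ++ h) (f' ++ h').
Proof.
move=> H1 H2; apply: J_ext (J_cat H1 H2) => w.
rewrite !coef_cat !coef_neg !coef_cat; ring.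
Qed.

Lemma coefT_cat c w1 w2 f h v : coef (Tm c w1 w2 (f ++ h)) v = coef (Tm c w1 w2 f) v + coef (Tm c w1 w2 h) v.
Proof. by rewrite /Tm map_cat coef_cat. Qed.

Lemma eqv_T c w1 w2 f h : eqv f h -> eqv (Tm c w1 w2 f) (Tm c w1 w2 h).
Proof.
move=> H; apply: J_ext (J_T c w1 w2 H) => w.
rewrite coef_cat coef_neg !coefT coef_cat coef_neg; case: ifP => _; last by rewrite subr0.
by rewrite mulrBr.
Qed.

Lemma eqv_eq f h : f = h -> eqv f h.
Proof. by move=> ->; apply: eqv_refl. Qed.

End Ideal.

Section Rels.
Variable r : nat.
Implicit Types (f h : fsum r) (w v : word r).

Lemma rel_swap (A B : mx r) a b w1 w2 : is_sp A -> is_sp B ->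
  eqv [:: (1, w1 ++ [:: (A, a); (B, b)] ++ w2)]
      [:: (1, w1 ++ [:: (B, b); (A, a)] ++ w2); (1, w1 ++ [:: (A *m B - B *m A, (a + b)%N)] ++ w2)].
Proof.
move=> HA HB.
have H : J (brel a b A B) by apply: J_rel; right; exists a, b, A, B.
by apply: J_ext (J_T 1 w1 w2 H) => w; rewrite /Tm /= !mul1r.
Qed.

Lemma rel_lin (A B : mx r) c k w1 w2 : is_sp A -> is_sp B ->
  eqv [:: (1, w1 ++ [:: (c *: A + B, k)] ++ w2)]
      [:: (c, w1 ++ [:: (A, k)] ++ w2); (1, w1 ++ [:: (B, k)] ++ w2)].
Proof.
move=> HA HB.
have H : J (linrel k c A B) by apply: J_rel; left; exists k, c, A, B.
by apply: J_ext (J_T 1 w1 w2 H) => w; rewrite /Tm /= !mul1r.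
Qed.

Lemma sp0 : is_sp (0 : mx r).
Proof. by apply/forallP => p; apply/forallP => q; rewrite !mxE mulr0 eqxx. Qed.

Lemma rel_zero k w1 w2 : eqv [:: (1, w1 ++ [:: ((0 : mx r), k)] ++ w2)] [::].
Proof.
have H := rel_lin 1 k w1 w2 sp0 sp0.
rewrite scale1r addr0 in H.
apply: J_ext (J_T (-1) [::] [::] H) => w.
rewrite coefT /=.
have -> : midw [::] [::] w = w by rewrite /midw /= drop0 !subn0 take_size.
rewrite cats0 eqxx !coef_cons !coef_nil; case: eqP => _; ring.
Qed.

Lemma rel_scal (A : mx r) c k w1 w2 : is_sp A ->
  eqv [:: (1, w1 ++ [:: (c *: A, k)] ++ w2)] [:: (c, w1 ++ [:: (A, k)] ++ w2)].
Proof.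
move=> HA; have H := rel_lin c k w1 w2 HA sp0.
rewrite addr0 in H; apply: eqv_trans H _.
rewrite -[X in eqv _ X]cats0 -cat1s; apply: eqv_cat; first exact: eqv_refl.
exact: rel_zero.
Qed.

Lemma eqv_single c w1 w2 w F :
  eqv [:: (1, w)] F -> eqv [:: (c, w1 ++ w ++ w2)] (Tm c w1 w2 F).
Proof.
move=> H; apply: eqv_trans (eqv_T c w1 w2 H).
by apply: eqv_eq; rewrite /Tm /= mulr1.
Qed.

End Rels.

Section Mat.
Variable r : nat.

Definition Ep (p q : nat) : mx r :=
  \matrix_(x, y) (((x : nat) == p) && ((y : nat) == q))%:R.

Definition Pp (a : nat) := (a - 1)%N.
Definition Nn (a : nat) := (r.*2 - a)%N.

Lemma posP a : (0 < a)%N -> pos r (zi a) = Pp a.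
Proof. by []. Qed.

Lemma posN a : (0 < a)%N -> pos r (- zi a) = Nn a.
Proof.
move=> Ha; rewrite /pos /zi abszN /=.
by case: a Ha.
Qed.

Lemma Ep_mul p q q' s :
  Ep p q *m Ep q' s = ((q == q') && (q < r.*2)%N)%:R *: Ep p s.
Proof.
apply/matrixP => x y; rewrite !mxE.
case: (ltnP q r.*2) => Hq; last first.
  rewrite andbF mul0r big1 // => k _; rewrite !mxE.
  have -> : ((k : nat) == q) = false by apply/negbTE; rewrite neq_ltn (leq_trans (ltn_ord k) Hq).
  by rewrite andbF mul0r.
rewrite (bigD1 (Ordinal Hq)) //= big1 ?addr0; last first.
  move=> k /negbTE Hk; rewrite !mxE.
  have -> : ((k : nat) == q) = false.
    by apply/negbTE; apply: contraFN Hk => /eqP E; apply/eqP/val_inj.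
  by rewrite andbF mul0r.
rewrite !mxE eqxx andbT andbT /=.
by case: (_ == p); case: (q == q'); case: (_ == s); rewrite /= ?mulr1 ?mulr0 ?mul0r ?mul1r.
Qed.

Lemma PpB a : (0 < a)%N -> (a <= r)%N -> (Pp a < r.*2)%N = true.
Proof. rewrite /Pp; lia. Qed.
Lemma NnB a : (0 < a)%N -> (a <= r)%N -> (Nn a < r.*2)%N = true.
Proof. rewrite /Nn; lia. Qed.
Lemma eqPP a b : (0 < a)%N -> (0 < b)%N -> (Pp a == Pp b) = (a == b).
Proof. rewrite /Pp => Ha Hb; apply/eqP/eqP; lia. Qed.
Lemma eqNN a b : (a <= r)%N -> (b <= r)%N -> (Nn a == Nn b) = (a == b).
Proof. rewrite /Nn => Ha Hb; apply/eqP/eqP; lia. Qed.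
Lemma eqPN a b : (0 < a)%N -> (a <= r)%N -> (b <= r)%N -> (Pp a == Nn b) = false.
Proof. rewrite /Pp /Nn => Ha Hb Hc; apply/eqP; lia. Qed.
Lemma eqNP a b : (0 < b)%N -> (a <= r)%N -> (b <= r)%N -> (Nn a == Pp b) = false.
Proof. rewrite /Pp /Nn => Ha Hb Hc; apply/eqP; lia. Qed.

Lemma xplusE a : (0 < a)%N -> (a <= r)%N ->
  xplus r a = if (a < r)%N then Ep (Pp a) (Nn r) + Ep (Pp r) (Nn a) else Ep (Pp r) (Nn r).
Proof.
move=> Ha Har; have Hr : (0 < r)%N by lia.
by rewrite /xplus /E !posP // !posN.
Qed.

Lemma xrootE i j : (0 < i)%N ->
  xminus_root r i j = Ep (Pp j.+1) (Pp i) - Ep (Nn i) (Nn j.+1).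
Proof. by move=> Hi; rewrite /xminus_root /E !posP // !posN. Qed.

Lemma xbarE i j : (0 < i)%N -> (0 < j)%N ->
  xminus_bar r i j = if (i < j)%N then Ep (Nn j) (Pp i) + Ep (Nn i) (Pp j) else Ep (Nn i) (Pp i).
Proof. by move=> Hi Hj; rewrite /xminus_bar /E !posP // !posN. Qed.

End Mat.

Section Comm.
Variable r : nat.

Ltac simpE := rewrite ?mulmxDl ?mulmxDr ?mulmxBl ?mulmxBr ?mulmxN ?mulNmx ?Ep_mul.
Ltac simpB := rewrite ?eqNP ?eqPN ?eqPP ?eqNN ?PpB ?NnB //= ?mulr0n ?mulr1n ?scale0r ?scale1r ?add0r ?addr0 ?subr0 ?sub0r ?oppr0 //.

Lemma comm_pp a b : (0 < a)%N -> (a <= r)%N -> (0 < b)%N -> (b <= r)%N ->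
  xplus r a *m xplus r b - xplus r b *m xplus r a = 0.
Proof.
move=> Ha Har Hb Hbr; have Hrr : (r <= r)%N by [].
have Hr : (0 < r)%N by lia.
rewrite !xplusE //; case: ifP => _; case: ifP => _; simpE; simpB.
Qed.


Lemma comm_root a i j : (0 < a)%N -> (a <= r)%N -> (0 < i)%N -> (i <= j)%N -> (j < r)%N ->
  xplus r a *m xminus_root r i j - xminus_root r i j *m xplus r a =
  (if a == i then - (if (j.+1 < r)%N then 1 else 2%:R) else 0) *: xplus r j.+1.
Proof.
move=> Ha Har Hi Hij Hjr; have Hrr : (r <= r)%N by [].
have Hr : (0 < r)%N by lia.
have Hir : (i <= r)%N by lia.
have Hj0 : (0 < j.+1)%N by [].
have Hir' : (i == r) = false by apply/eqP; lia.
have Hri' : (r == i) = false by apply/eqP; lia.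
rewrite xrootE // !xplusE //.
case Haq: (a < r)%N; case Hjq: (j.+1 < r)%N; simpE; simpB; rewrite ?Hir' ?Hri' /= ?scale0r ?add0r ?addr0 ?oppr0 ?sub0r.
all: case: (a =P i) => [Hai|/eqP Hai]; [subst a; rewrite ?eqxx | rewrite ?(negbTE Hai) ?(eq_sym i a) ?(negbTE Hai)].
all: rewrite /= ?scale0r ?scale1r ?add0r ?addr0 ?subr0 ?oppr0 ?sub0r //.
- by rewrite scaleN1r opprD addrC.
- have Hjr' : j.+1 = r by lia.
  by rewrite Hjr' scaleNr scaler_nat mulr2n opprD.
- exfalso; lia.
- exfalso; lia.
Qed.


Lemma comm_bar a i j : (0 < a)%N -> (a <= r)%N -> (0 < i)%N -> (i <= j)%N -> (j < r)%N ->
  xplus r a *m xminus_bar r i j - xminus_bar r i j *m xplus r a =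
  if a == i then xminus_root r j (r - 1) else if a == j then xminus_root r i (r - 1) else 0.
Proof.
move=> Ha Har Hi Hij Hjr; have Hrr : (r <= r)%N by [].
have Hr : (0 < r)%N by lia.
have Hir : (i <= r)%N by lia.
have Hj : (0 < j)%N by lia.
have Hjr2 : (j <= r)%N by lia.
have Hr1 : (r - 1).+1 = r by lia.
have Hir' : (i == r) = false by apply/eqP; lia.
have Hri' : (r == i) = false by apply/eqP; lia.
have Hjr' : (j == r) = false by apply/eqP; lia.
have Hrj' : (r == j) = false by apply/eqP; lia.
rewrite xbarE // !xrootE // Hr1 !xplusE //.
case Haq: (a < r)%N; case Hijq: (i < j)%N; simpE; simpB; rewrite ?Hir' ?Hri' ?Hjr' ?Hrj' /= ?scale0r ?add0r ?addr0 ?oppr0 ?sub0r.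
all: case: (a =P i) => [Hai|/eqP Hai]; [subst a; rewrite ?eqxx | rewrite ?(negbTE Hai) ?(eq_sym i a) ?(negbTE Hai)].
all: rewrite /= ?scale0r ?scale1r ?add0r ?addr0 ?subr0 ?oppr0 ?sub0r //.
all: try (case: (a =P j) => [Haj|/eqP Haj]; [subst a; rewrite ?eqxx | rewrite ?(negbTE Haj) ?(eq_sym j a) ?(negbTE Haj)]).
all: rewrite /= ?scale0r ?scale1r ?add0r ?addr0 ?subr0 ?oppr0 ?sub0r //.
all: first [ by exfalso; lia | idtac ].
all: case: (eqVneq i j) => [Heq|Hne]; [subst j | rewrite ?(negbTE Hne) ?(eq_sym j i) ?(negbTE Hne)].
all: rewrite /= ?eqxx ?scale0r ?scale1r ?add0r ?addr0 ?oppr0 ?sub0r ?subr0 //.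
all: try (exfalso; lia).
Qed.

End Comm.

Section Sp.
Variable r : nat.

Definition msig (A : mx r) : mx r :=
  \matrix_(p, q) (- (sgnp p * sgnp q) * A (rev_ord q) (rev_ord p)).

Lemma is_spE (A : mx r) : is_sp A = (A == msig A).
Proof.
apply/idP/eqP => [H|H].
  apply/matrixP => p q; rewrite mxE.
  by move/forallP: H => /(_ p) /forallP /(_ q) /eqP.
apply/forallP => p; apply/forallP => q; apply/eqP.
by rewrite {1}H mxE.
Qed.

Lemma msigD (A B : mx r) : msig (A + B) = msig A + msig B.
Proof. by apply/matrixP => p q; rewrite !mxE mulrDr. Qed.
Lemma msigN (A : mx r) : msig (- A) = - msig A.
Proof. by apply/matrixP => p q; rewrite !mxE mulrN. Qed.
Lemma msigB (A B : mx r) : msig (A - B) = msig A - msig B.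
Proof. by rewrite msigD msigN. Qed.

Definition sg (z : nat) : C := if (z < r)%N then 1 else -1.

Lemma msig_Ep x y : (x < r.*2)%N -> (y < r.*2)%N ->
  msig (Ep r x y) = (- (sg x * sg y)) *: Ep r (r.*2 - y.+1)%N (r.*2 - x.+1)%N.
Proof.
move=> Hx Hy; apply/matrixP => p q; rewrite !mxE /=.
have Hp := ltn_ord p; have Hq := ltn_ord q.
case: (eqVneq (p : nat) (r.*2 - y.+1)%N) => [Hpy|/eqP Hpy].
  have -> : (r.*2 - p.+1 == y)%N by apply/eqP; lia.
  case: (eqVneq (q : nat) (r.*2 - x.+1)%N) => [Hqx|/eqP Hqx].
    have -> : (r.*2 - q.+1 == x)%N by apply/eqP; lia.
    rewrite /= mulr1 /sgnp /sg mulr1.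
    case: (ltnP p r) => H1; case: (ltnP q r) => H2; case: (ltnP x r) => H3;
      case: (ltnP y r) => H4; try (exfalso; lia); rewrite ?mulN1r ?mul1r ?mulrN1 ?opprK //.
  have -> : (r.*2 - q.+1 == x)%N = false by apply/eqP; lia.
  by rewrite /= !mulr0.
have -> : (r.*2 - p.+1 == y)%N = false by apply/eqP; lia.
by rewrite /= andbF !mulr0.
Qed.

Lemma sgP a : (0 < a)%N -> (a <= r)%N -> sg (Pp a) = 1.
Proof. by move=> Ha Hb; rewrite /sg /Pp; case: ltnP => //; lia. Qed.
Lemma sgN a : (0 < a)%N -> (a <= r)%N -> sg (Nn r a) = -1.
Proof. by move=> Ha Hb; rewrite /sg /Nn; case: ltnP => //; lia. Qed.
Lemma revP a : (0 < a)%N -> (a <= r)%N -> (r.*2 - (Pp a).+1)%N = Nn r a.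
Proof. rewrite /Pp /Nn; lia. Qed.
Lemma revN a : (0 < a)%N -> (a <= r)%N -> (r.*2 - (Nn r a).+1)%N = Pp a.
Proof. rewrite /Pp /Nn; lia. Qed.

Lemma msigPN a b : (0 < a)%N -> (a <= r)%N -> (0 < b)%N -> (b <= r)%N ->
  msig (Ep r (Pp a) (Nn r b)) = Ep r (Pp b) (Nn r a).
Proof.
move=> *; rewrite msig_Ep ?PpB ?NnB // sgP // sgN // revP // revN //.
by rewrite mulrN1 opprK scale1r.
Qed.
Lemma msigPP a b : (0 < a)%N -> (a <= r)%N -> (0 < b)%N -> (b <= r)%N ->
  msig (Ep r (Pp a) (Pp b)) = - Ep r (Nn r b) (Nn r a).
Proof.
move=> *; rewrite msig_Ep ?PpB ?NnB // !sgP // !revP //.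
by rewrite mulr1 scaleN1r.
Qed.
Lemma msigNN a b : (0 < a)%N -> (a <= r)%N -> (0 < b)%N -> (b <= r)%N ->
  msig (Ep r (Nn r a) (Nn r b)) = - Ep r (Pp b) (Pp a).
Proof.
move=> *; rewrite msig_Ep ?PpB ?NnB // !sgN // !revN //.
by rewrite mulrN1 opprK scaleN1r.
Qed.
Lemma msigNP a b : (0 < a)%N -> (a <= r)%N -> (0 < b)%N -> (b <= r)%N ->
  msig (Ep r (Nn r a) (Pp b)) = Ep r (Nn r b) (Pp a).
Proof.
move=> *; rewrite msig_Ep ?PpB ?NnB // sgP // sgN // revP // revN //.
by rewrite mulr1 opprK scale1r.
Qed.

Lemma sp_xplus a : (0 < a)%N -> (a <= r)%N -> is_sp (xplus r a).
Proof.
move=> Ha Har; have Hr : (0 < r)%N by lia.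
have Hrr : (r <= r)%N by [].
rewrite is_spE xplusE //; apply/eqP.
case: ifP => _; rewrite ?msigD !msigPN //; by rewrite addrC.
Qed.

Lemma sp_root i j : (0 < i)%N -> (i <= j)%N -> (j < r)%N -> is_sp (xminus_root r i j).
Proof.
move=> Hi Hij Hjr; have Hir : (i <= r)%N by lia.
rewrite is_spE xrootE //; apply/eqP.
rewrite msigB msigPP // msigNN //.
by rewrite opprK addrC.
Qed.

Lemma sp_bar i j : (0 < i)%N -> (i <= j)%N -> (j < r)%N -> is_sp (xminus_bar r i j).
Proof.
move=> Hi Hij Hjr; have Hir : (i <= r)%N by lia.
have Hj : (0 < j)%N by lia. have Hjr' : (j <= r)%N by lia.
rewrite is_spE xbarE //; apply/eqP.
case: ifP => _; rewrite ?msigD !msigNP //; by rewrite addrC.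
Qed.

End Sp.

Section Sym.
Variable r : nat.

Definition nl := (bool * nat * nat)%type.
Definition nint (y : nl) : mx r :=
  if y.1.1 then xminus_bar r y.1.2 y.2 else xminus_root r y.1.2 y.2.
Definition validn (y : nl) : bool := (0 < y.1.2)%N && (y.1.2 <= y.2)%N && (y.2 < r)%N.
Definition validp (x : nat * nat) : bool := (0 < x.1)%N && (x.1 <= r)%N && (0 < x.2)%N.
Definition nw (u : seq (nl * nat)) : word r := [seq (nint y.1, y.2) | y <- u].
Definition pw (X : seq (nat * nat)) : word r := [seq (xplus r x.1, x.2) | x <- X].
Definition Cm (y : nl * nat) : seq (nat * nat) :=
  if ~~ y.1.1.1 && (y.1.2.+1 == r) then [:: (r, y.2)] else [::].
Definition Phi (u : seq (nl * nat)) (X : seq (nat * nat)) := flatten (map Cm u) ++ X.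
Definition Sf t (M : seq (nat * nat)) := sumn [seq q.2 | q <- M & (t <= q.1)%N].
Definition ge M M' := forall t, (Sf t M' <= Sf t M)%N.
Definition gt M M' := ge M M' /\ exists t, (Sf t M' < Sf t M)%N.

Lemma S_cat t M M' : Sf t (M ++ M') = (Sf t M + Sf t M')%N.
Proof. by rewrite /Sf filter_cat map_cat sumn_cat. Qed.
Lemma S_nil t : Sf t [::] = 0%N.
Proof. by []. Qed.
Lemma S1 t p v : Sf t [:: (p, v)] = if (t <= p)%N then v else 0%N.
Proof. by rewrite /Sf /=; case: ifP => //=; rewrite addn0. Qed.
Lemma S_cons t x M : Sf t (x :: M) = (Sf t [:: x] + Sf t M)%N.
Proof. by rewrite -cat1s S_cat. Qed.
Lemma S_rcons t M x : Sf t (rcons M x) = (Sf t M + Sf t [:: x])%N.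
Proof. by rewrite -cats1 S_cat. Qed.

Lemma ge_refl M : ge M M. Proof. by move=> t. Qed.
Lemma ge_trans M1 M2 M3 : ge M1 M2 -> ge M2 M3 -> ge M1 M3.
Proof. by move=> H1 H2 t; apply: leq_trans (H2 t) (H1 t). Qed.
Lemma gt_ge_trans M1 M2 M3 : gt M1 M2 -> ge M2 M3 -> gt M1 M3.
Proof.
move=> [H1 [t Ht]] H2; split; first exact: ge_trans H1 H2.
by exists t; apply: leq_ltn_trans (H2 t) Ht.
Qed.
Lemma ge_gt_trans M1 M2 M3 : ge M1 M2 -> gt M2 M3 -> gt M1 M3.
Proof.
move=> H1 [H2 [t Ht]]; split; first exact: ge_trans H1 H2.
by exists t; apply: leq_trans Ht (H1 t).
Qed.
Lemma ge_catr M M' N : ge M M' -> ge (M ++ N) (M' ++ N).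
Proof. by move=> H t; rewrite !S_cat leq_add2r. Qed.
Lemma gt_catr M M' N : gt M M' -> gt (M ++ N) (M' ++ N).
Proof.
move=> [H [t Ht]]; split; first exact: ge_catr.
by exists t; rewrite !S_cat ltn_add2r.
Qed.
Lemma ge_catl M M' N : ge M M' -> ge (N ++ M) (N ++ M').
Proof. by move=> H t; rewrite !S_cat leq_add2l. Qed.
Lemma gt_catl M M' N : gt M M' -> gt (N ++ M) (N ++ M').
Proof.
move=> [H [t Ht]]; split; first exact: ge_catl.
by exists t; rewrite !S_cat ltn_add2l.
Qed.

Definition trip := (C * seq (nl * nat) * seq (nat * nat))%type.
Definition interp (T : seq trip) : fsum r := [seq (t.1.1, nw t.1.2 ++ pw t.2) | t <- T].

Definition Good (z : trip) (u : seq (nl * nat)) (X : seq (nat * nat)) : Prop :=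
  [/\ all (fun p => validn p.1) z.1.2, all validp z.2, ge (Phi z.1.2 z.2) (Phi u X) &
      (z.1.2 = [::] -> u <> [::] -> gt (Phi z.1.2 z.2) (Phi u X))].

Lemma interp_cat T1 T2 : interp (T1 ++ T2) = interp T1 ++ interp T2.
Proof. exact: map_cat. Qed.

Lemma Phi_rcons u X x : Phi u (rcons X x) = rcons (Phi u X) x.
Proof. by rewrite /Phi rcons_cat. Qed.

Lemma sp_nint y : validn y -> is_sp (nint y).
Proof.
rewrite /validn /nint => /andP [/andP [H1 H2] H3].
by case: ifP => _; [apply: sp_bar | apply: sp_root].
Qed.

Lemma sp_validp x : validp x -> is_sp (xplus r x.1).
Proof. by rewrite /validp => /andP [/andP [H1 H2] H3]; apply: sp_xplus. Qed.

Lemma lemY X : all validp X -> forall y l, validn y ->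
  exists T : seq trip, eqv [:: (1, pw X ++ [:: (nint y, l)])] (interp T) /\
    forall z, z \in T -> Good z [:: (y, l)] X.
Proof.
elim/last_ind: X => [|X1 x IH] HX y l Hy.
  exists [:: (1, [:: (y, l)], [::])]; split.
    by apply: eqv_eq.
  move=> z; rewrite inE => /eqP -> /=; split => //=; first by rewrite Hy.
move: HX; rewrite all_rcons => /andP [Hx HX1].
case: x Hx => a k Hx.
have Hspx := sp_validp Hx.
have Hspy := sp_nint Hy.
have := rel_swap k l (pw X1) [::] Hspx Hspy.
rewrite /pw map_rcons -/(pw X1) -cats1 -catA cats0 /= => Hsw.
have [T1 [E1 G1]] := IH HX1 y l Hy.
set T1' := [seq (z.1.1, z.1.2, rcons z.2 (a, k)) | z <- T1].
have E1' : eqv [:: (1, pw X1 ++ [:: (nint y, l); (xplus r a, k)])] (interp T1').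
  have := eqv_single 1 [::] [:: (xplus r a, k)] E1.
  rewrite /= -catA /= => H; apply: eqv_trans H _; apply: eqv_eq.
  rewrite /Tm /interp /T1' -!map_comp; apply: eq_map => z /=.
  by rewrite mul1r /pw map_rcons -cats1 !catA.
have G1' : forall z, z \in T1' -> Good z [:: (y, l)] (rcons X1 (a, k)).
  move=> z /mapP [z0 Hz0 ->] /=.
  have [V1 V2 V3 V4] := G1 z0 Hz0; split => //=.
  - by rewrite all_rcons Hx.
  - by rewrite !Phi_rcons -!cats1; apply: ge_catr.
  - by move=> H1 H2; rewrite !Phi_rcons -!cats1; apply: gt_catr; apply: V4.
suff [T2 [E2 G2]] : exists T2 : seq trip,
    eqv [:: (1, pw X1 ++ [:: (xplus r a *m nint y - nint y *m xplus r a, (k + l)%N)])] (interp T2) /\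
    forall z, z \in T2 -> Good z [:: (y, l)] (rcons X1 (a, k)).
  exists (T1' ++ T2); split; last first.
    by move=> z; rewrite mem_cat => /orP [/G1'|/G2].
  apply: eqv_trans Hsw _; rewrite interp_cat.
  have -> : forall (t1 t2 : C * word r), [:: t1; t2] = [:: t1] ++ [:: t2] by [].
  by apply: eqv_cat.
clear Hsw G1' E1' T1' G1 E1 T1.
case: y Hy Hspy => [[b i] j] Hy Hspy.
move: (Hy) (Hx); rewrite /validn /validp /= => /andP [/andP [Hi Hij] Hjr] /andP [/andP [Ha Har] Hk].
have Hr1 : (r - 1).+1 = r by lia.
rewrite /nint /=; case: b Hy Hspy => Hy Hspy.
- rewrite comm_bar //.
  have Hgt : forall i', (0 < i')%N -> (i' < r)%N -> (a < r)%N ->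
      gt (Phi [:: ((false, i', (r - 1)%N), (k + l)%N)] X1) (Phi [:: ((true, i, j), l)] (rcons X1 (a, k))).
    move=> i' Hi' Hi'r Har'.
    rewrite /Phi /Cm /= Hr1 eqxx /=; split.
      move=> t; rewrite S_cons S_rcons !S1; case: (leqP t a); case: (leqP t r); lia.
    by exists r; rewrite S_cons S_rcons !S1 leqnn; case: (leqP r a); lia.
  have HGt : forall i', (0 < i')%N -> (i' < r)%N -> (a < r)%N ->
    forall T : seq trip, (forall z, z \in T -> Good z [:: ((false, i', (r - 1)%N), (k + l)%N)] X1) ->
    forall z, z \in T -> Good z [:: ((true, i, j), l)] (rcons X1 (a, k)).
    move=> i' Hi' Hi'r Har' T HT z Hz; have [V1 V2 V3 V4] := HT z Hz.
    have [Hg1 Hg2] := Hgt i' Hi' Hi'r Har'.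
    split => //; first exact: ge_trans V3 Hg1.
    move=> _ _; apply: ge_gt_trans V3 _; exact: Hgt.
  case: eqP => Hai.
    have Hy' : validn (false, j, (r - 1)%N) by rewrite /validn /=; apply/andP; split; [apply/andP; split|]; lia.
    have [T2 [E2 G2]] := IH HX1 _ (k + l)%N Hy'.
    exists T2; split; first exact: E2.
    apply: HGt G2; lia.
  case: eqP => Haj.
    have Hy' : validn (false, i, (r - 1)%N) by rewrite /validn /=; apply/andP; split; [apply/andP; split|]; lia.
    have [T2 [E2 G2]] := IH HX1 _ (k + l)%N Hy'.
    exists T2; split; first exact: E2.
    apply: HGt G2; lia.
  exists [::]; split => //.
  have := rel_zero (r := r) (k + l) (pw X1) [::]; by rewrite cats0.
- rewrite comm_root //.
  case: eqP => Hai; last first.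
    exists [::]; split => //.
    have := rel_zero (r := r) (k + l) (pw X1) [::]; by rewrite scale0r cats0.
  set c := - _.
  have Hsp' : is_sp (xplus r j.+1) by apply: sp_xplus.
  exists [:: (c, [::], rcons X1 (j.+1, (k + l)%N))]; split.
    have := rel_scal c (k + l) (pw X1) [::] Hsp'; rewrite cats0 => H.
    apply: eqv_trans H _; apply: eqv_eq.
    by rewrite /interp /= /pw map_rcons -cats1.
  move=> z; rewrite inE => /eqP -> /=; split => //=.
  - by rewrite all_rcons HX1 /validp /= andbT; apply/andP; split; lia.
  - move=> t; rewrite /Phi /Cm /= ?S_cat ?S_cons !S_rcons !S1.
    case: ifP => Hc; rewrite ?S1 ?S_nil; [move/eqP: Hc => Hc|];
      case: (leqP t a); case: (leqP t r); case: (leqP t j.+1); lia.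
  - move=> _ _; split.
      move=> t; rewrite /Phi /Cm /= ?S_cat ?S_cons !S_rcons !S1.
      case: ifP => Hc; rewrite ?S1 ?S_nil; [move/eqP: Hc => Hc|];
        case: (leqP t a); case: (leqP t r); case: (leqP t j.+1); lia.
    exists j.+1; rewrite /Phi /Cm /= ?S_cat ?S_cons !S_rcons !S1 leqnn.
    case: ifP => Hc; rewrite ?S1 ?S_nil; [move/eqP: Hc => Hc|];
      case: (leqP j.+1 a); case: (leqP j.+1 r); lia.
Qed.

End Sym.

Section Main.
Variable r : nat.

Lemma eqv_bind (T0 : seq (trip)) (F : trip -> C * word r) (P : trip -> Prop) :
  (forall t, t \in T0 -> exists T' : seq (trip), eqv [:: F t] (interp r T') /\ forall z, z \in T' -> P z) ->
  exists T : seq (trip), eqv (map F T0) (interp r T) /\ forall z, z \in T -> P z.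
Proof.
elim: T0 => [|t T0 IH] H.
  by exists [::]; split => //; apply: eqv_refl.
have [T1 [E1 P1]] := H t (mem_head _ _).
have [T2 [E2 P2]] : exists T : seq trip, eqv (map F T0) (interp r T) /\ forall z, z \in T -> P z.
  by apply: IH => t' Ht'; apply: H; rewrite inE Ht' orbT.
exists (T1 ++ T2); split.
  by rewrite interp_cat /= -cat1s; apply: eqv_cat.
by move=> z; rewrite mem_cat => /orP [/P1|/P2].
Qed.

Definition CM (u : seq (nl * nat)) := flatten (map (Cm r) u).

Lemma S_CM_cat t u v : Sf t (CM (u ++ v)) = (Sf t (CM u) + Sf t (CM v))%N.
Proof. by rewrite /CM map_cat flatten_cat S_cat. Qed.

Lemma S_Phi t u X : Sf t (Phi r u X) = (Sf t (CM u) + Sf t X)%N.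
Proof. by rewrite /Phi S_cat. Qed.
Lemma S_CM_rcons t u x : Sf t (CM (rcons u x)) = (Sf t (CM u) + Sf t (Cm r x))%N.
Proof. by rewrite -cats1 S_CM_cat /CM /= cats0. Qed.
Lemma S_CM1 t x : Sf t (CM [:: x]) = Sf t (Cm r x).
Proof. by rewrite /CM /= cats0. Qed.

Lemma S_CM0 t : Sf t (CM [::]) = 0%N.
Proof. by []. Qed.

Lemma lemM X : all (validp r) X -> forall u, all (fun p => validn r p.1) u ->
  exists T : seq (trip), eqv [:: (1, pw r X ++ nw r u)] (interp r T) /\
    forall z, z \in T -> Good r z u X.
Proof.
move=> HX; elim/last_ind => [|u0 yl IH] Hu.
  exists [:: (1, [::], X)]; split.
    by apply: eqv_eq; rewrite /interp /= cats0.
  by move=> z; rewrite inE => /eqP -> /=; split => //=.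
move: Hu; rewrite all_rcons => /andP [Hy Hu0].
have [T0 [E0 G0]] := IH Hu0.
case: yl Hy => y l /= Hy.
have E0' := eqv_single 1 [::] [:: (nint r y, l)] E0.
rewrite /= in E0'.
have -> : pw r X ++ nw r (rcons u0 (y, l)) = (pw r X ++ nw r u0) ++ [:: (nint r y, l)].
  by rewrite /nw map_rcons -cats1 catA.
apply: (fun H => (let: ex_intro T (conj H1 H2) := H in ex_intro _ T (conj (eqv_trans E0' H1) H2))).
rewrite /Tm /interp -map_comp.
apply: (eqv_bind (F := fun t : trip => (1 * t.1.1, [::] ++ (nw r t.1.2 ++ pw r t.2) ++ [:: (nint r y, l)]))) => t Ht.
have [V1 V2 V3 V4] := G0 t Ht.
have [Tt [Et Gt]] := lemY V2 l Hy.
exists [seq (t.1.1 * z.1.1, t.1.2 ++ z.1.2, z.2) | z <- Tt]; split.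
  have := eqv_single t.1.1 (nw r t.1.2) [::] Et.
  rewrite cats0 => H; apply: eqv_trans _ (eqv_trans H _); apply: eqv_eq.
    by rewrite mul1r /= !catA.
  rewrite /Tm /interp -!map_comp; apply: eq_map => z /=.
  by rewrite cats0 /nw map_cat catA.
move=> z /mapP [z' Hz' ->].
have [W1 W2 W3 W4] := Gt z' Hz'.
split => /=.
- by rewrite all_cat V1 W1.
- exact: W2.
- move=> s; move: (V3 s) (W3 s). 
  rewrite !S_Phi S_CM_rcons S_CM_cat S_CM1.
  move: (Sf s (CM u0)) (Sf s X) (Sf s (CM t.1.2)) (Sf s t.2) (Sf s (Cm r (y, l))) (Sf s (CM z'.1.2)) (Sf s z'.2).
  move=> a1 a2 a3 a4 a5 a6 a7; lia.
- move=> Hnil _.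
  case Etu: (t.1.2) Hnil => [|? ?] //= Hz'nil.
  have [_ [s Hs]] := W4 Hz'nil (fun H => ltac:(discriminate H)).
  split.
    move=> s'; move: (V3 s') (W3 s').
    rewrite !S_Phi S_CM_rcons ?S_CM_cat S_CM1 ?Etu ?S_CM0.
    move: (Sf s' (CM u0)) (Sf s' X) (Sf s' (CM [::])) (Sf s' t.2) (Sf s' (Cm r (y, l))) (Sf s' (CM z'.1.2)) (Sf s' z'.2).
    move=> a1 a2 a3 a4 a5 a6 a7; lia.
  exists s; move: (V3 s) Hs.
  rewrite !S_Phi S_CM_rcons ?S_CM_cat S_CM1 ?Etu ?S_CM0.
  move: (Sf s (CM u0)) (Sf s X) (Sf s (CM [::])) (Sf s t.2) (Sf s (Cm r (y, l))) (Sf s (CM z'.1.2)) (Sf s z'.2).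
  move=> a1 a2 a3 a4 a5 a6 a7; lia.
Qed.

End Main.

Section Perm.
Variable r : nat.

Lemma scale_eqv c w w' : eqv [:: (1, w)] [:: (1, w')] -> eqv [:: (c, w)] [:: (c, w' : word r)].
Proof.
move=> H; have := eqv_single c [::] [::] H; rewrite /= !cats0 /Tm /= mulr1 => H'.
by apply: eqv_trans H' _; apply: eqv_eq.
Qed.

Lemma swap_pp x y w1 w2 : validp r x -> validp r y ->
  eqv [:: (1, w1 ++ [:: (xplus r x.1, x.2); (xplus r y.1, y.2)] ++ w2)]
      [:: (1, w1 ++ [:: (xplus r y.1, y.2); (xplus r x.1, x.2)] ++ w2)].
Proof.
move=> Hx Hy; apply: eqv_trans (rel_swap _ _ w1 w2 (sp_validp Hx) (sp_validp Hy)) _.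
move: Hx Hy; rewrite /validp => /andP [/andP [Ha Har] _] /andP [/andP [Hb Hbr] _].
rewrite comm_pp //.
rewrite -[X in eqv _ X]cats0 -cat1s; apply: eqv_cat; first exact: eqv_refl.
exact: rel_zero.
Qed.

Lemma comm_move x Y w1 w2 : validp r x -> all (validp r) Y ->
  eqv [:: (1, w1 ++ [:: (xplus r x.1, x.2)] ++ pw r Y ++ w2)]
      [:: (1, w1 ++ pw r Y ++ [:: (xplus r x.1, x.2)] ++ w2)].
Proof.
move=> Hx; elim: Y w1 => [|y Y IH] w1 /=; first by move=> _; apply: eqv_refl.
move=> /andP [Hy HY].
apply: eqv_trans (swap_pp w1 (pw r Y ++ w2) Hx Hy) _.
have := IH (w1 ++ [:: (xplus r y.1, y.2)]) HY; rewrite -!catA /= => H.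
exact: H.
Qed.

Lemma perm_eqv X X' w1 w2 : all (validp r) X -> perm_eq X X' ->
  eqv [:: (1, w1 ++ pw r X ++ w2)] [:: (1, w1 ++ pw r X' ++ w2)].
Proof.
elim: X X' w1 => [|x X IH] X' w1 HX Hp.
  by move: Hp; rewrite perm_sym => /perm_nilP ->; apply: eqv_refl.
move: HX => /= /andP [Hx HX].
have Hin : x \in X' by rewrite -(perm_mem Hp) mem_head.
case/splitPr: Hin Hp => X1 X2 Hp.
have Hp' : perm_eq X (X1 ++ X2).
  by rewrite -(perm_cons x); apply: perm_trans Hp _; rewrite -[x :: X2]cat1s perm_catCA.
have HX12 : all (validp r) (X1 ++ X2) by rewrite -(perm_all _ Hp').
move: (HX12); rewrite all_cat => /andP [HX1 HX2].
have := IH _ (w1 ++ [:: (xplus r x.1, x.2)]) HX Hp'; rewrite -!catA /= => H1.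
apply: eqv_trans H1 _.
rewrite /pw map_cat -/(pw r X1) -/(pw r X2) /= -catA.
have := comm_move (w1) (pw r X2 ++ w2) Hx HX1; rewrite /= => H2.
apply: eqv_trans H2 _; apply: eqv_eq.
by rewrite map_cat /= -!catA.
Qed.

Lemma nint_basis y : validn r y -> nint r y \in nminus_basis r.
Proof.
rewrite /validn /nint => /andP [/andP [Hi Hij] Hjr].
apply/flatten_mapP; exists y.1.2; first by rewrite mem_iota; apply/andP; split; lia.
apply/flatten_mapP; exists y.2; first by rewrite mem_iota; apply/andP; split; lia.
by case: ifP => _; rewrite !inE eqxx ?orbT.
Qed.

Lemma basis_nint A : A \in nminus_basis r -> exists y, validn r y /\ nint r y = A.
Proof.
case/flatten_mapP => i; rewrite mem_iota => /andP [Hi1 Hi2].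
case/flatten_mapP => j; rewrite mem_iota => /andP [Hj1 Hj2].
rewrite !inE => /orP [/eqP ->|/eqP ->].
  exists (false, i, j); split => //; rewrite /validn /=; apply/andP; split; [apply/andP; split|]; lia.
exists (true, i, j); split => //; rewrite /validn /=; apply/andP; split; [apply/andP; split|]; lia.
Qed.

Lemma word_nw (w : word r) : nminus_word w -> exists u, all (fun p => validn r p.1) u /\ w = nw r u.
Proof.
elim: w => [|[A k] w IH] /=; first by exists [::].
move=> /andP [HA Hw]; have [u [Hu ->]] := IH Hw.
have [y [Hy <-]] := basis_nint HA.
by exists ((y, k) :: u); split => //=; rewrite Hy.
Qed.

Lemma nw_word u : all (fun p => validn r p.1) u -> nminus_word (nw r u).
Proof.
elim: u => [|[y k] u IH] //= /andP [Hy Hu].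
by rewrite nint_basis // IH.
Qed.

End Perm.

Section Canon.
Variable r : nat.

Lemma enumI : Finite.enum 'I_r = index_enum 'I_r.
Proof. by rewrite /index_enum unlock. Qed.

Definition Xof (p : {ffun 'I_r -> seq nat}) : seq (nat * nat) :=
  flatten [seq [seq (i.+1, k) | k <- p i] | i : 'I_r <- enum 'I_r].

Lemma xword_pw p : xword p = pw r (Xof p).
Proof.
rewrite /xword /pw /Xof map_flatten -map_comp; congr flatten; apply: eq_map => i /=.
by rewrite -map_comp.
Qed.

Lemma valid_Xof p : isFr p -> all (validp r) (Xof p).
Proof.
move=> Hp; apply/allP => q /flatten_mapP [i _ /mapP [k Hk ->]].
move: (Hp i); rewrite /isFplus => /andP [_ /allP /(_ k Hk) Hk0].
by rewrite /validp /= Hk0 andbT ltn_ord.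
Qed.

Lemma perm_sort_leq (s : seq nat) : perm_eq (sort leq s) s.
Proof. by rewrite perm_sort. Qed.

Definition Fi (X : seq (nat * nat)) (i : 'I_r) := [seq q.2 | q <- X & q.1 == i.+1].
Definition pof (X : seq (nat * nat)) : {ffun 'I_r -> seq nat} := [ffun i => sort leq (Fi X i)].

Lemma isFr_pof X : all (validp r) X -> isFr (pof X).
Proof.
move=> HX i; rewrite /isFplus ffunE sort_sorted /=; last exact: leq_total.
rewrite (perm_all _ (perm_sort_leq _)) /Fi all_map; apply/allP => q.
rewrite mem_filter => /andP [_ Hq]; move/allP: HX => /(_ q Hq).
by rewrite /validp => /andP [_ H].
Qed.

Lemma sum_ind (q : nat * nat) : (0 < q.1)%N -> (q.1 <= r)%N ->
  sumn [seq ((q.1 == i.+1) : nat) | i : 'I_r <- enum 'I_r] = 1%N.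
Proof.
move=> H1 H2; have H : (q.1 - 1 < r)%N by lia.
rewrite sumnE big_map big_enum /= (bigD1 (Ordinal H)) //= big1 => [|i Hi].
  by have -> : q.1 == (q.1 - 1).+1 by apply/eqP; lia.
case: eqP => // Hq; exfalso; move/eqP: Hi; apply; apply/val_inj => /=; lia.
Qed.

Lemma sumn_add (s : seq 'I_r) (f g : 'I_r -> nat) :
  sumn [seq (f i + g i)%N | i <- s] = (sumn [seq f i | i <- s] + sumn [seq g i | i <- s])%N.
Proof. by elim: s => //= i s ->; lia. Qed.

Lemma count_split X (a : pred (nat * nat)) : all (validp r) X ->
  sumn [seq count a [seq q <- X | q.1 == i.+1] | i : 'I_r <- enum 'I_r] = count a X.
Proof.
elim: X => [|q X IH] /=.
  by move=> _; elim: (enum 'I_r).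
move=> /andP [Hq HX].
have -> : [seq count a (if q.1 == i.+1 then q :: [seq q0 <- X | q0.1 == i.+1] else [seq q0 <- X | q0.1 == i.+1]) | i : 'I_r <- enum 'I_r]
        = [seq ((a q && (q.1 == i.+1) : nat) + count a [seq q0 <- X | q0.1 == i.+1])%N | i : 'I_r <- enum 'I_r].
  by apply: eq_map => i; case: (q.1 == i.+1) => /=; rewrite ?andbT ?andbF.
rewrite sumn_add IH //; congr addn.
move: Hq; rewrite /validp => /andP [/andP [H1 H2] _].
case: (a q) => /=; last by elim: (enum 'I_r).
exact: sum_ind.
Qed.

Lemma perm_pof X : all (validp r) X -> perm_eq X (Xof (pof X)).
Proof.
move=> HX; apply/permP => a.
rewrite /Xof count_flatten -map_comp -(count_split a HX).
congr sumn; apply: eq_map => i /=.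
rewrite ffunE.
have -> : count a [seq (i.+1, k) | k <- sort leq (Fi X i)] = count a [seq (i.+1, k) | k <- Fi X i].
  by apply/permP; apply: perm_map; apply: perm_sort_leq.
rewrite /Fi -map_comp; congr count.
apply/esym; clear HX; elim: X => //= q X IH; case: eqP => //= Hq.
by rewrite IH -Hq; case: q Hq.
Qed.

Definition mf (M : seq (nat * nat)) a := sumn [seq q.2 | q <- M & q.1 == a].

Lemma absF_pof X i : absF (pof X) i = mf X i.+1.
Proof. by rewrite /absF ffunE (perm_sumn (perm_sort_leq _)). Qed.

Lemma absF_Xof p i : absF p i = mf (Xof p) i.+1.
Proof.
rewrite /absF /mf /Xof filter_flatten map_flatten sumn_flatten -!map_comp.
rewrite [RHS]sumnE big_map ?enumT enumI (bigD1 i) //= big1 => [|j Hj].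
  rewrite filter_map /= -map_comp /preim /=.
  rewrite (eq_filter (a2 := predT)); last by move=> k /=; rewrite eqxx.
  by rewrite filter_predT map_id addn0.
rewrite filter_map /preim /=.
rewrite (eq_filter (a2 := pred0)) ?filter_pred0 // => k /=.
by apply/eqP => /eqP; rewrite eqSS => /eqP H; move/eqP: Hj; apply; apply: val_inj.
Qed.

Lemma Sf_mf t M : Sf t M = (mf M t + Sf t.+1 M)%N.
Proof.
elim: M => [|q M IH] //.
have Sc : forall t' (M' : seq (nat * nat)), Sf t' (q :: M') = ((if (t' <= q.1)%N then q.2 else 0) + Sf t' M')%N.
  by move=> t' M'; rewrite /Sf /=; case: ifP.
have Mc : mf (q :: M) t = ((if q.1 == t then q.2 else 0) + mf M t)%N.
  by rewrite /mf /=; case: ifP.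
rewrite !Sc Mc IH; case: (leqP t q.1); case: eqP; case: (leqP t.+1 q.1); lia.
Qed.

Lemma Sf_big t M : all (validp r) M -> (r < t)%N -> Sf t M = 0%N.
Proof.
move=> HM Ht; rewrite /Sf (eq_in_filter (a2 := pred0)) ?filter_pred0 // => q /=.
move/allP: HM => /(_ q) H /H; rewrite /validp => /andP [/andP [_ H2] _].
apply/negbTE; lia.
Qed.

Lemma Sf0 M : all (validp r) M -> Sf 0 M = Sf 1 M.
Proof.
move=> HM; rewrite /Sf; congr sumn; congr map; apply: eq_in_filter => q /=.
move/allP: HM => /(_ q) H /H; rewrite /validp => /andP [/andP [H1 _] _].
by rewrite H1.
Qed.

Lemma btri_of (d e : 'I_r -> nat) M M' : all (validp r) M -> all (validp r) M' ->
  (forall i, d i = mf M i.+1) -> (forall i, e i = mf M' i.+1) ->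
  ge M M' -> (exists t, (Sf t M' < Sf t M)%N) -> btri d e.
Proof.
move=> HM HM' Hd He Hge [t Ht].
pose P := fun n => (0 < n)%N && (n <= r)%N && (Sf n M' < Sf n M)%N.
have HP : exists n, P n.
  case: (leqP t r) => Htr; last by rewrite !Sf_big // in Ht.
  case: t Ht Htr => [|t] Ht Htr.
    exists 1%N; rewrite /P /= -!Sf0 // Ht andbT.
    case: (posnP r) => [Hr0|//]; have Hr1 : (r < 1)%N by rewrite Hr0.
    by move: Ht; rewrite !Sf0 // !Sf_big.
  by exists t.+1; rewrite /P Ht Htr.
have Hub : forall n, P n -> (n <= r)%N by move=> n /andP [/andP [_ ->] _].
case: (ex_maxnP HP Hub) => m /andP [/andP [Hm0 Hmr] Hm] Hmax.
have Heq : forall n, (m < n)%N -> Sf n M = Sf n M'.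
  move=> n Hn; case: (leqP n r) => Hnr; last by rewrite !Sf_big.
  apply/eqP; rewrite eqn_leq Hge andbT leqNgt; apply/negP => Hlt.
  have := Hmax n; rewrite /P Hlt Hnr (ltn_trans Hm0 Hn) => /(_ isT); lia.
have Hm1 : (m - 1 < r)%N by lia.
exists (Ordinal Hm1); split.
  rewrite Hd He /=; have -> : (m - 1).+1 = m by lia.
  move: Hm; rewrite (Sf_mf m M) (Sf_mf m M') (Heq m.+1) //; lia.
move=> u /= Hu; rewrite Hd He.
have E1 := Sf_mf u.+1 M; have E2 := Sf_mf u.+1 M'.
rewrite (Heq u.+1) in E1; last lia.
rewrite (Heq u.+2) in E1; last lia.
lia.
Qed.

End Canon.

Section Final.
Variable r : nat.

Lemma bindG (A B : eqType) (T0 : seq A) (F : A -> C * word r) (G : B -> C * word r) (P : B -> Prop) :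
  (forall t, t \in T0 -> exists T' : seq B, eqv [:: F t] (map G T') /\ forall z, z \in T' -> P z) ->
  exists T : seq B, eqv (map F T0) (map G T) /\ forall z, z \in T -> P z.
Proof.
elim: T0 => [|t T0 IH] H.
  by exists [::]; split => //; apply: eqv_refl.
have [T1 [E1 P1]] := H t (mem_head _ _).
have [T2 [E2 P2]] : exists T : seq B, eqv (map F T0) (map G T) /\ forall z, z \in T -> P z.
  by apply: IH => t' Ht'; apply: H; rewrite inE Ht' orbT.
exists (T1 ++ T2); split.
  by rewrite map_cat /= -cat1s; apply: eqv_cat.
by move=> z; rewrite mem_cat => /orP [/P1|/P2].
Qed.

End Final.

Unset Implicit Arguments.

Theorem lemma4p9 (r : nat) (s : {ffun 'I_r -> seq nat}) (g : fsum r) (eta : 'I_r -> C) :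
  isFr s ->
  (forall x, x \in g -> nminus_word x.2 /\ word_wt x.2 (fun i => - eta i)) ->
  (exists i, eta i != 0) ->
  exists L : seq ((C * word r) * {ffun 'I_r -> seq nat}),
    (forall e, e \in L ->
        [/\ nminus_word e.1.2, isFr e.2 & (e.1.2 = [::] -> btri (absF e.2) (absF s))]) /\
    eqU (fmul (fone (xword s)) g ++ fneg (fmul g (fone (xword s))))
        [seq (e.1.1, e.1.2 ++ xword e.2) | e <- L].
Proof.
move=> HF Hg [i0 Hi0].
set Xs := Xof s.
have HXs : all (validp r) Xs := valid_Xof HF.
pose G := fun e : (C * word r) * {ffun 'I_r -> seq nat} => (e.1.1, e.1.2 ++ xword e.2).
pose P := fun e : (C * word r) * {ffun 'I_r -> seq nat} =>
  [/\ nminus_word e.1.2, isFr e.2 & (e.1.2 = [::] -> btri (absF e.2) (absF s))].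
have [L1 [E1 P1]] : exists L1, eqv [seq (1 * x.1, xword s ++ x.2) | x <- g] (map G L1) /\
    forall e, e \in L1 -> P e.
  apply: bindG => x Hx.
  have [Hw Hwt] := Hg x Hx.
  have [u [Hu Hxu]] := word_nw Hw.
  have Hu0 : u <> [::].
    move=> Hu0; rewrite Hu0 /= in Hxu; rewrite Hxu /= in Hwt.
    by move/eqP: Hi0; apply; rewrite -[eta i0]opprK Hwt oppr0.
  have [T [ET GT]] := lemM HXs Hu.
  have := eqv_single (1 * x.1) [::] [::] ET.
  rewrite /= cats0 => ET'.
  have -> : xword s ++ x.2 = pw r Xs ++ nw r u by rewrite Hxu xword_pw.
  apply: (fun H => let: ex_intro T0 (conj H1 H2) := H in ex_intro _ T0 (conj (eqv_trans ET' H1) H2)).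
  rewrite /Tm /interp -map_comp.
  apply: bindG => z Hz.
  have [V1 V2 V3 V4] := GT z Hz.
  exists [:: ((1 * x.1 * z.1.1, nw r z.1.2), pof r z.2)]; split.
    rewrite /= /G /= xword_pw cats0.
    apply: scale_eqv.
    have := @perm_eqv r _ _ (nw r z.1.2) [::] V2 (perm_pof V2); rewrite !cats0 //.
  move=> e; rewrite inE => /eqP -> /=; split => /=.
  - exact: nw_word.
  - exact: isFr_pof.
  - move=> Hnil.
    have Hz0 : z.1.2 = [::] by move: Hnil; rewrite /nw; case: (z.1.2).
    have [Hge [t Ht]] := V4 Hz0 Hu0.
    move: Hge Ht; rewrite Hz0 /Phi /= => Hge Ht.
    apply: (btri_of (M := z.2) (M' := Xs)) => //.
    + by move=> i; rewrite absF_pof.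
    + by move=> i; rewrite absF_Xof.
    + move=> t'; apply: leq_trans (Hge t'); rewrite S_cat; exact: leq_addl.
    + exists t; apply: leq_ltn_trans _ Ht; rewrite S_cat; exact: leq_addl.
exists (L1 ++ [seq ((- x.1, x.2), s) | x <- g]); split.
  move=> e; rewrite mem_cat => /orP [/P1 //|/mapP [x Hx ->]] /=.
  have [Hw _] := Hg x Hx; split => // H.
  have [_ Hwt] := Hg x Hx; rewrite H /= in Hwt.
  by exfalso; move/eqP: Hi0; apply; rewrite -[eta i0]opprK Hwt oppr0.
change (eqv (fmul (fone (xword s)) g ++ fneg (fmul g (fone (xword s))))
            (map G (L1 ++ [seq ((- x.1, x.2), s) | x <- g]))).
rewrite map_cat; apply: eqv_cat.
  by rewrite fone_mul.
apply: eqv_eq; rewrite /fone fmul1 /fneg /G -!map_comp; apply: eq_map => x /=.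
by rewrite mulr1.
Qed.
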